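(* Let $\mathbb{P}: M_2 \to M_2$ be the linear map $$\mathbb{P}\begin{pmatrix} x_{11} & x_{12} \\ x_{21} & x_{22}\end{pmatrix} = \begin{pmatrix} \frac{x_{11}+x_{22}}{2} & x_{12} \\ x_{21} & \frac{x_{11}+x_{22}}{2}\end{pmatrix},$$ and define on operators on $\mathbb{C}^2\otimes\mathbb{C}^2\otimes\mathbb{C}^2$ $$\Phi_3(\varrho) = (\mathbb{P}\otimes\mathbb{I}\otimes\mathbb{I})(\varrho) + (\mathbb{I}\otimes\mathbb{P}\otimes\mathbb{I})(\varrho) + (\mathbb{I}\otimes\mathbb{I}\otimes\mathbb{P})(\varrho) + \tfrac12\,\mathrm{Tr}(\varrho)\, I,$$ with $\mathbb{I}$ the identity map on $M_2$ and $I$ the $8\times8$ identity. Let $|GHZ\rangle=\frac{1}{\sqrt2}(|000\rangle+|111\rangle)$ and $\mathcal{W}=\Phi_3(|GHZ\rangle\langle GHZ|)$. Then $\mathcal{W}$ is a genuine tripartite entanglement witness: $\mathrm{Tr}(\mathcal{W}\rho)\ge 0$ for every biseparable three-qubit state $\rho$, while for the genuinely entangled state $|\widetilde{GHZ}\rangle=\frac{1}{\sqrt2}(|000\rangle-|111\rangle)$ one has $\mathrm{Tr}(\mathcal{W}\,|\widetilde{GHZ}\rangle\langle\widetilde{GHZ}|)=-\frac14<0$.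
   Context: A three-qubit state $\rho$ is biseparable if it can be written as $\rho = p_1\,\rho_1\otimes\rho_{23} + p_2\,\rho_2\otimes\rho_{13} + p_3\,\rho_3\otimes\rho_{12}$ (each term across the indicated bipartition $1|23$, $2|13$, $3|12$), where $p_i\ge 0$, $\sum_i p_i=1$, and $\rho_i$, $\rho_{jk}$ are density matrices on the indicated qubits; a state that is not biseparable is genuinely (tripartite) entangled. $M_2$ is the space of complex $2\times 2$ matrices and $\{|0\rangle,|1\rangle\}$ the standard basis of $\mathbb{C}^2$. *)

(* Defs.v *)
From HB Require Import structures.
From mathcomp Require Import all_boot all_order all_algebra all_field.
Set Implicit Arguments. Unset Strict Implicit. Unset Printing Implicit Defensive.
Import Order.TTheory GRing.Theory Num.Theory.
Local Open Scope ring_scope.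

Definition adj (m n : nat) (A : 'M[algC]_(m, n)) : 'M[algC]_(n, m) :=
  \matrix_(i, j) (A j i)^*.

Definition density (n : nat) (A : 'M[algC]_n) : Prop :=
  adj A = A /\ (forall v : 'cV[algC]_n, 0 <= (adj v *m A *m v) 0 0) /\ \tr A = 1.

(* Three-qubit basis: index i : 'I_8 is |b0 b1 b2> with i = 4 b0 + 2 b1 + b2;
   qubits are numbered 0,1,2 (paper's 1,2,3). *)
Definition qubit (i : 'I_8) (k : 'I_3) : 'I_2 :=
  inord ((i %/ 2 ^ (2 - k)) %% 2).

Definition setq (i : 'I_8) (k : 'I_3) (a : 'I_2) : 'I_8 :=
  inord (i - qubit i k * 2 ^ (2 - k) + a * 2 ^ (2 - k)).

Definition rest (k : 'I_3) (i : 'I_8) : 'I_4 :=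
  let q := fun m : nat => (nat_of_ord (qubit i (inord m))) in
  inord (match nat_of_ord k with
         | 0 => 2 * q 1 + q 2
         | 1 => 2 * q 0 + q 2
         | _ => 2 * q 0 + q 1
         end).

(* rho_k (x) rho_rest across the bipartition k | (other two qubits) *)
Definition bip (k : 'I_3) (A : 'M[algC]_2) (B : 'M[algC]_4) : 'M[algC]_8 :=
  \matrix_(i, j) (A (qubit i k) (qubit j k) * B (rest k i) (rest k j)).

Definition biseparable (rho : 'M[algC]_8) : Prop :=
  exists (p : 'I_3 -> algC) (A : 'I_3 -> 'M[algC]_2) (B : 'I_3 -> 'M[algC]_4),
    (forall k, 0 <= p k) /\ \sum_k p k = 1 /\
    (forall k, density (A k)) /\ (forall k, density (B k)) /\
    rho = \sum_k p k *: bip k (A k) (B k).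

Definition Pmap (X : 'M[algC]_2) : 'M[algC]_2 :=
  \matrix_(a, b) (if a == b then (X 0 0 + X 1 1) / 2 else X a b).

Definition on_qubit (k : 'I_3) (L : 'M[algC]_2 -> 'M[algC]_2)
    (X : 'M[algC]_8) : 'M[algC]_8 :=
  \matrix_(i, j) L (\matrix_(a, b) X (setq i k a) (setq j k b)) (qubit i k) (qubit j k).

Definition Phi3 (X : 'M[algC]_8) : 'M[algC]_8 :=
  on_qubit 0 Pmap X + on_qubit 1 Pmap X + on_qubit 2 Pmap X + (\tr X / 2) *: 1%:M.

Definition ket (i : 'I_8) : 'cV[algC]_8 := \col_j (if j == i then 1 else 0).
Definition proj (v : 'cV[algC]_8) : 'M[algC]_8 := v *m adj v.

Definition GHZ : 'cV[algC]_8 := (sqrtC 2)^-1 *: (ket 0 + ket (inord 7)).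
Definition GHZt : 'cV[algC]_8 := (sqrtC 2)^-1 *: (ket 0 - ket (inord 7)).

Definition Wit : 'M[algC]_8 := Phi3 (proj GHZ).

(* Main.v *)
Require Import Defs.
From mathcomp Require Import all_boot all_order all_algebra all_field.
From mathcomp Require Import ring lra.
Import Order.TTheory GRing.Theory Num.Theory.
Local Open Scope ring_scope.

Definition b2 (b : bool) : nat := if b then 1%N else 0%N.
Definition qv (i k : nat) : nat :=
  b2 (Nat.odd (match k with 0 => Nat.div2 (Nat.div2 i) | 1 => Nat.div2 i | _ => i end)).
Definition sv (i k a : nat) : nat :=
  match k with
  | 0 => Nat.add (Nat.mul 4 a) (Nat.add (Nat.mul 2 (qv i 1)) (qv i 2))
  | 1 => Nat.add (Nat.mul 4 (qv i 0)) (Nat.add (Nat.mul 2 a) (qv i 2))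
  | _ => Nat.add (Nat.mul 4 (qv i 0)) (Nat.add (Nat.mul 2 (qv i 1)) a)
  end.
Definition rv (k i : nat) : nat :=
  match k with
  | 0 => Nat.add (Nat.mul 2 (qv i 1)) (qv i 2)
  | 1 => Nat.add (Nat.mul 2 (qv i 0)) (qv i 2)
  | _ => Nat.add (Nat.mul 2 (qv i 0)) (qv i 1)
  end.

Ltac ord8 i := case: i => [[|[|[|[|[|[|[|[|i]]]]]]]] ?] //.
Ltac ord4 i := case: i => [[|[|[|[|i]]]] ?] //.
Ltac ord3 i := case: i => [[|[|[|i]]] ?] //.
Ltac ord2 i := case: i => [[|[|i]] ?] //.

Lemma qubitE i k : nat_of_ord (qubit i k) = qv i k.
Proof. rewrite /qubit inordK ?ltn_pmod //; ord8 i; ord3 k. Qed.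
Lemma setqE i k a : nat_of_ord (setq i k a) = sv i k a.
Proof. rewrite /setq inordK; ord8 i; ord3 k; ord2 a; rewrite /qubit inordK ?ltn_pmod //. Qed.
Lemma restE k i : nat_of_ord (rest k i) = rv k i.
Proof. rewrite /rest inordK; ord3 k; rewrite /qubit !inordK ?ltn_pmod //; ord8 i. Qed.

Arguments b2 b /. Arguments qv i k /. Arguments sv i k a /. Arguments rv k i /.
Definition nf {n} (M : 'M[algC]_n.+1) (x y : nat) := M (inord x) (inord y).
Lemma nfE n (M : 'M[algC]_n.+1) i j : M i j = nf M i j.
Proof. by rewrite /nf !inord_val. Qed.

Lemma tr_bip k A B : \tr (bip k A B) = \tr A * \tr B.
Proof.
rewrite /mxtrace !big_ord_recl !big_ord0 !mxE !nfE !qubitE !restE !lift0 /=.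
ord3 k; rewrite /=; ring.
Qed.

Lemma bip_entries k A B :
  [/\ nf (bip k A B) 0 0 = nf A 0 0 * nf B 0 0,
      nf (bip k A B) 7 7 = nf A 1 1 * nf B 3 3,
      nf (bip k A B) 0 7 = nf A 0 1 * nf B 0 3 &
      nf (bip k A B) 7 0 = nf A 1 0 * nf B 3 0].
Proof.
rewrite /nf !mxE !nfE !qubitE !restE !inordK //; ord3 k.
Qed.

Lemma projE (v : 'cV[algC]_8) i j : proj v i j = v i 0 * (v j 0)^*.
Proof. by rewrite /proj mxE big_ord1 /adj mxE. Qed.

Lemma sqrt2K : (sqrtC 2)^-1 * ((sqrtC 2)^-1)^* = 1/2 :> algC.
Proof.
have h : 0 <= (sqrtC 2)^-1 :> algC by rewrite invr_ge0 sqrtC_ge0 ler0n.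
rewrite (geC0_conj h) -invfM -expr2 sqrtCK. by rewrite mul1r.
Qed.

Definition inS (x : nat) : bool := (x == 0)%N || (x == 7)%N.
Definition pgn (x y : nat) : algC := if inS x && inS y then 1/2 else 0.
Definition pgtn (x y : nat) : algC :=
  if inS x && inS y then (if x == y then 1/2 else -(1/2)) else 0.

Lemma ketE (i : 'I_8) (x : 'I_8) : ket x i 0 = ((nat_of_ord i == nat_of_ord x) : nat)%:R.
Proof. by rewrite /ket mxE; case: eqP => [->|/eqP]; rewrite ?eqxx // -val_eqE => /negbTE ->. Qed.

Lemma projGHZE (i j : 'I_8) : proj GHZ i j = pgn i j.
Proof.
rewrite projE /GHZ !mxE -!val_eqE /= !inordK // /pgn /inS.
ord8 i; ord8 j; rewrite /= ?addr0 ?add0r ?mulr0 ?mul0r ?mulr1 ?conjC0 ?mulr0 ?sqrt2K //.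
Qed.
Lemma projGHZtE (i j : 'I_8) : proj GHZt i j = pgtn i j.
Proof.
rewrite projE /GHZt !mxE -!val_eqE /= !inordK // /pgtn /inS.
ord8 i; ord8 j; rewrite /= ?subr0 ?sub0r ?mulr0 ?mul0r ?mulr1 ?mulrN1 ?conjC0 ?rmorphN ?mulr0 ?mulrN ?mulNr ?opprK ?sqrt2K //.
Qed.
Lemma trP (P : 'M[algC]_8) : (forall i j : 'I_8, P i j = pgn i j) -> \tr P = 1.
Proof.
move=> hP; rewrite /mxtrace !big_ord_recl big_ord0 !hP !lift0 /= /pgn /=.
by rewrite !addr0 !add0r; field.
Qed.
Lemma eq_ordE n (a b : 'I_n) : (a == b) = (nat_of_ord a == nat_of_ord b).
Proof. by []. Qed.
Definition wn (x y : nat) : algC :=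
  if x == y then (if inS x then 5/4 else 3/4)
  else if inS x && inS y then 3/2 else 0.
Lemma WitE (i j : 'I_8) : Wit i j = wn i j.
Proof.
rewrite /Wit /Phi3.
have hP := projGHZE; move: (proj GHZ) hP => P hP.
have o1 : nat_of_ord (1 : 'I_2) = 1%N by [].
rewrite !mxE !hP (@trP P hP) !eq_ordE !setqE !qubitE !o1 /=.
ord8 i; ord8 j; rewrite /= /wn /pgn /=. all: by field.
Qed.
Lemma trW (M : 'M[algC]_8) : \tr (Wit *m M) =
  3/4 * \tr M + 1/2 * (nf M 0 0 + nf M 7 7) + 3/2 * (nf M 0 7 + nf M 7 0).
Proof.
rewrite /mxtrace; under eq_bigr do rewrite mxE.
rewrite !big_ord_recl !big_ord0 !WitE !nfE !lift0 /= /wn /=.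
by field.
Qed.

Lemma core (R : realFieldType) (a d b e x y : R) :
  0 <= a -> 0 <= d -> 0 <= b -> 0 <= e -> a + d = 1 -> b + e <= 1 ->
  0 <= x -> x ^+ 2 <= a * d * (b * e) -> - (2 * x) <= y ->
  0 <= 3 + 2 * (a * b + d * e) + 6 * y.
Proof.
move=> ha hd hb he had hbe hx hxx hy.
set Q := 5 * (a * b + d * e) + 3 * (a * e + b * d).
have hQ : Q <= 3 + 2 * (a * b + d * e).
  have : (a + d) * (b + e) <= 1 by rewrite had mul1r.
  rewrite /Q; nra.
have hQ0 : 0 <= Q by rewrite /Q; nra.
have sos : Q ^+ 2 - 256 * (a * d * (b * e)) =
   25 * (a * b - d * e) ^+ 2 + 9 * (a * e - b * d) ^+ 2 +
   30 * (b * e * (a - d) ^+ 2 + a * d * (b - e) ^+ 2).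
  rewrite /Q; ring.
have h1 : 0 <= Q ^+ 2 - 256 * (a * d * (b * e)).
  rewrite sos; have := sqr_ge0 (a * b - d * e); have := sqr_ge0 (a * e - b * d);
  have := sqr_ge0 (a - d); have := sqr_ge0 (b - e).
  have := mulr_ge0 hb he; have := mulr_ge0 ha hd. nra.
have hP : 0 <= a * d * (b * e) by rewrite !mulr_ge0.
have h12 : 12 * x <= Q.
  have h2 : (12 * x) ^+ 2 <= Q ^+ 2 by nra.
  by rewrite -(@ler_pXn2r _ 2) // nnegrE ?mulr_ge0.
lra.
Qed.

Lemma core_algC (a d b e x y : algC) :
  0 <= a -> 0 <= d -> 0 <= b -> 0 <= e -> a + d = 1 -> b + e <= 1 ->
  0 <= x -> x ^+ 2 <= a * d * (b * e) -> y \is Num.real -> - (2 * x) <= y ->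
  0 <= 3 + 2 * (a * b + d * e) + 6 * y.
Proof.
move=> ha hd hb he had hbe hx hxx hyR hy.
pose ra := in_algR (ger0_real ha). pose rd := in_algR (ger0_real hd).
pose rb := in_algR (ger0_real hb). pose re := in_algR (ger0_real he).
pose rx := in_algR (ger0_real hx). pose ry := in_algR hyR.
have H := @core algR ra rd rb re rx ry.
have E (u v : algR) : (u <= v) = (algRval u <= algRval v) by [].
rewrite !E /= in H; apply: H => //.
all: try (by apply: val_inj; rewrite /= had).
Qed.

Lemma qfE n (A : 'M[algC]_n) (v : 'cV_n) :
  (adj v *m A *m v) 0 0 = \sum_j (\sum_i (v i 0)^* * A i j) * v j 0.
Proof.
rewrite mxE; apply: eq_bigr => j _; rewrite mxE; congr (_ * _).
by apply: eq_bigr => i _; rewrite /adj mxE.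
Qed.

Lemma conjN (x : algC) : (- x)^* = - x^*.
Proof. exact: rmorphN. Qed.
Lemma conjD (x y : algC) : (x + y)^* = x^* + y^*.
Proof. exact: rmorphD. Qed.
Lemma conjM (x y : algC) : (x * y)^* = x^* * y^*.
Proof. exact: rmorphM. Qed.

Lemma eqle (x y : algC) : x = y -> x <= y.
Proof. by move=> ->. Qed.

Lemma psdA (A : 'M[algC]_2) : density A -> forall al be : algC,
  0 <= al^* * nf A 0 0 * al + al^* * nf A 0 1 * be + be^* * nf A 1 0 * al
       + be^* * nf A 1 1 * be.
Proof.
move=> [_ [hq _]] al be.
have := hq (\col_i (if nat_of_ord i == 0%N then al else be)).
rewrite qfE !big_ord_recl !big_ord0 !mxE !nfE !lift0 /= => h.
apply: (le_trans h); apply: eqle; ring.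
Qed.

Lemma psdB (B : 'M[algC]_4) : density B -> forall al be : algC,
  0 <= al^* * nf B 0 0 * al + al^* * nf B 0 3 * be + be^* * nf B 3 0 * al
       + be^* * nf B 3 3 * be.
Proof.
move=> [_ [hq _]] al be.
have := hq (\col_i (if nat_of_ord i == 0%N then al else if nat_of_ord i == 3%N then be else 0)).
rewrite qfE !big_ord_recl !big_ord0 !mxE !nfE !lift0 /= => h.
apply: (le_trans h); apply: eqle; rewrite ?conjC0; ring.
Qed.

Lemma diag_ge0 n (M : 'M[algC]_n) i : density M -> 0 <= M i i.
Proof.
move=> [_ [hq _]]; have := hq (delta_mx i (0:'I_1)).
have -> : adj (delta_mx i (0:'I_1)) = delta_mx (0:'I_1) i :> 'M[algC]_(1, n).
  by apply/matrixP => k l; rewrite /adj !mxE conjC_nat andbC.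
by rewrite -rowE -colE !mxE.
Qed.

Lemma herm n (M : 'M[algC]_n.+1) x y : density M -> nf M y x = (nf M x y)^*.
Proof. by move=> [hA _]; rewrite /nf -{1}hA mxE. Qed.

Lemma bip_ge0 k A B : density A -> density B -> 0 <= \tr (Wit *m bip k A B).
Proof.
move=> dA dB.
have [e00 e77 e07 e70] := bip_entries k A B.
rewrite trW tr_bip e00 e77 e07 e70.
have trA : \tr A = nf A 0 0 + nf A 1 1.
  by rewrite /mxtrace !big_ord_recl big_ord0 !nfE !lift0 /= addr0.
have trB : \tr B = nf B 0 0 + nf B 1 1 + nf B 2 2 + nf B 3 3.
  by rewrite /mxtrace !big_ord_recl big_ord0 !nfE !lift0 /= addr0 !addrA.
have [_ [_ tA]] := dA; have [_ [_ tB]] := dB.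
rewrite tA tB.
have hA10 : nf A 1 0 = (nf A 0 1)^* by apply: herm.
have hB30 : nf B 3 0 = (nf B 0 3)^* by apply: herm.
rewrite hA10 hB30.
set a := nf A 0 0; set d := nf A 1 1; set c := nf A 0 1.
set b := nf B 0 0; set e := nf B 3 3; set f := nf B 0 3.
have ha : 0 <= a by rewrite /a /nf; apply: diag_ge0.
have hd : 0 <= d by rewrite /d /nf; apply: diag_ge0.
have hb : 0 <= b by rewrite /b /nf; apply: diag_ge0.
have he : 0 <= e by rewrite /e /nf; apply: diag_ge0.
have hb1 : 0 <= nf B 1 1 by rewrite /nf; apply: diag_ge0.
have hb2 : 0 <= nf B 2 2 by rewrite /nf; apply: diag_ge0.
have had : a + d = 1 by rewrite -tA trA.
have hbe : b + e <= 1.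
  have <- : b + e + (nf B 1 1 + nf B 2 2) = 1 by rewrite -tB trB /b /e; ring.
  by rewrite lerDl addr_ge0.
have ca : a^* = a by rewrite geC0_conj.
have cd : d^* = d by rewrite geC0_conj.
have cb : b^* = b by rewrite geC0_conj.
have ce : e^* = e by rewrite geC0_conj.
have mA : 0 <= a * d - c * c^*.
  have h1 := @psdA A dA c (- a); have h2 := @psdA A dA d (- c^*).
  rewrite hA10 -/a -/c -/d in h1 h2.
  have := addr_ge0 h1 h2; rewrite ?conjN ?conjCK ?ca ?cd.
  move=> h; apply: (le_trans h); apply: eqle.
  have -> : d = 1 - a by rewrite -had; ring.
  ring.
have mB : 0 <= b * e - f * f^*.
  have h1 := @psdB B dB f (- b); have h2 := @psdB B dB e (- f^*).
  rewrite hB30 -/b -/e -/f in h1 h2.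
  have h12 := addr_ge0 h1 h2; rewrite ?conjN ?conjCK ?cb ?ce in h12.
  have h3 : 0 <= (b + e) * (b * e - f * f^*).
    apply: (le_trans h12); apply: eqle; ring.
  have : 0 <= b + e by rewrite addr_ge0.
  rewrite le0r => /orP [/eqP be0|bepos]; last by rewrite -(pmulr_rge0 _ bepos).
  have /andP [/eqP b0 /eqP e0] : (b == 0) && (e == 0) by rewrite -paddr_eq0 // be0.
  have h4 := @psdB B dB 1 (- f^*).
  rewrite hB30 -/b -/e -/f b0 e0 ?conjN ?conjCK ?conjC1 in h4.
  rewrite b0 e0 mul0r sub0r.
  have : 0 <= 2 * (- (f * f^*)) by apply: (le_trans h4); apply: eqle; ring.
  by rewrite pmulr_rge0 // ltr0n.
set x := `|c| * `|f|.
set y := c * f + c^* * f^*.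
have hx : 0 <= x by rewrite /x mulr_ge0.
have hxx : x ^+ 2 <= a * d * (b * e).
  rewrite /x exprMn !normCK; apply: ler_pM.
  - by rewrite -normCK exprn_ge0.
  - by rewrite -normCK exprn_ge0.
  - by rewrite -subr_ge0.
  - by rewrite -subr_ge0.
have hyR : y \is Num.real.
  by rewrite CrealE /y conjD !conjM !conjCK addrC.
have hy : - (2 * x) <= y.
  rewrite lerNl.
  have h1 : - y <= `|y| by rewrite -normrN real_ler_norm // rpredN.
  apply: (le_trans h1); rewrite /y; apply: (le_trans (ler_normD _ _)).
  by rewrite !normrM !norm_conjC /x mulr2n mulrDl mul1r.
have := @core_algC a d b e x y ha hd hb he had hbe hx hxx hyR hy.
move=> h.
have -> : 3 / 4 * (1 * 1) + 1 / 2 * (a * b + d * e) + 3 / 2 * (c * f + c^* * f^*)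
   = 4^-1 * (3 + 2 * (a * b + d * e) + 6 * y) by rewrite /y; field.
by rewrite mulr_ge0 // invr_ge0 ler0n.
Qed.

Lemma part2 : \tr (Wit *m proj GHZt) = - (1 / 4).
Proof.
have h x y : (x < 8)%N -> (y < 8)%N -> nf (proj GHZt) x y = pgtn x y.
  by move=> hx hy; rewrite /nf projGHZtE !inordK.
rewrite trW /mxtrace !big_ord_recl big_ord0 !projGHZtE !lift0 !h //= /pgtn /=.
by field.
Qed.

Theorem proposition2 :
  (forall rho : 'M[algC]_8, biseparable rho -> 0 <= \tr (Wit *m rho)) /\
  \tr (Wit *m proj GHZt) = - (1 / 4) /\
  ~ biseparable (proj GHZt).
Proof.
have p1 : forall rho : 'M[algC]_8, biseparable rho -> 0 <= \tr (Wit *m rho).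
  move=> rho [p [A [B [hp [_ [hA [hB ->]]]]]]].
  rewrite mulmx_sumr raddf_sum /=; apply: sumr_ge0 => k _.
  by rewrite -scalemxAr mxtraceZ mulr_ge0 // bip_ge0.
split; first exact: p1.
split; first exact: part2.
move=> /p1; rewrite part2 oppr_ge0 => h.
have : 0 < 1 / 4 :> algC by rewrite mul1r invr_gt0 ltr0n.
by move=> hp; have := lt_le_trans hp h; rewrite ltxx.
Qed.
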